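(* Let $v\ge2$ and $M,N\in{\cal I}_v$ with $N=N_1+N_2$, where $N_1=\beta M$ for some $\beta\in\mathbb R$ and $M\perp N_2$ with respect to $(x,y):=\mathrm{Re}(xy^* )$. Then $$\{e^M,e^N\}=2(\cos|M|)\,e^N+2\,\frac{\sin|M|}{|M|}\,M\Big(\cos|N|+\frac{\sin|N|}{|N|}N_1\Big).$$
   Context: ${\cal A}_v$ is the real Cayley-Dickson algebra of dimension $2^v$, $z^*$ its conjugation, $\mathrm{Re}(z)=(z+z^* )/2$, $|z|=(zz^* )^{1/2}$, ${\cal I}_v=\{z:\mathrm{Re}(z)=0\}$. For $M\in{\cal I}_v$, $e^M=\cos|M|+\frac{\sin|M|}{|M|}M$ (with $\frac{\sin|M|}{|M|}:=1$ when $M=0$). $\{a,b\}:=ab+ba$ is the anticommutator. *)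

(* Defs.v *)
From Stdlib Require Import Reals.
Open Scope R_scope.

(* Real Cayley-Dickson algebra A_v of dimension 2^v:
   A_0 = R, A_{v+1} = A_v x A_v with
   (a,b)(c,d) = (ac - conj(d) b, da + b conj(c)),  conj(a,b) = (conj a, -b). *)
Fixpoint CD (v : nat) : Type :=
  match v with O => R | S n => (CD n * CD n)%type end.

Fixpoint cd_real (v : nat) : R -> CD v :=
  match v return R -> CD v with
  | O => fun r => r
  | S n => fun r => (cd_real n r, cd_real n 0)
  end.

Definition cd_zero (v : nat) : CD v := cd_real v 0.

Fixpoint cd_add (v : nat) : CD v -> CD v -> CD v :=
  match v return CD v -> CD v -> CD v with
  | O => fun x y => x + y
  | S n => fun x y => (cd_add n (fst x) (fst y), cd_add n (snd x) (snd y))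
  end.

Fixpoint cd_opp (v : nat) : CD v -> CD v :=
  match v return CD v -> CD v with
  | O => fun x => - x
  | S n => fun x => (cd_opp n (fst x), cd_opp n (snd x))
  end.

Definition cd_sub (v : nat) (x y : CD v) : CD v := cd_add v x (cd_opp v y).

Fixpoint cd_scal (v : nat) : R -> CD v -> CD v :=
  match v return R -> CD v -> CD v with
  | O => fun r x => r * x
  | S n => fun r x => (cd_scal n r (fst x), cd_scal n r (snd x))
  end.

Fixpoint cd_conj (v : nat) : CD v -> CD v :=
  match v return CD v -> CD v with
  | O => fun x => x
  | S n => fun x => (cd_conj n (fst x), cd_opp n (snd x))
  end.

Fixpoint cd_mul (v : nat) : CD v -> CD v -> CD v :=
  match v return CD v -> CD v -> CD v with
  | O => fun x y => x * y
  | S n => fun x y =>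
      let a := fst x in let b := snd x in let c := fst y in let d := snd y in
      (cd_sub n (cd_mul n a c) (cd_mul n (cd_conj n d) b),
       cd_add n (cd_mul n d a) (cd_mul n b (cd_conj n c)))
  end.

Definition cd_Re (v : nat) (z : CD v) : CD v :=
  cd_scal v (/ 2) (cd_add v z (cd_conj v z)).

Fixpoint cd_re0 (v : nat) : CD v -> R :=
  match v return CD v -> R with
  | O => fun x => x
  | S n => fun x => cd_re0 n (fst x)
  end.

(* |z| = (z z^* )^{1/2}; z z^* is real, we take the square root of its
   real coordinate *)
Definition cd_norm (v : nat) (z : CD v) : R :=
  sqrt (cd_re0 v (cd_mul v z (cd_conj v z))).

Definition cd_inner (v : nat) (x y : CD v) : CD v :=
  cd_Re v (cd_mul v x (cd_conj v y)).

Definition cd_imag (v : nat) (z : CD v) : Prop := cd_Re v z = cd_zero v.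

Definition sinc (r : R) : R := if Req_EM_T r 0 then 1 else sin r / r.

Definition cd_exp (v : nat) (M : CD v) : CD v :=
  cd_add v (cd_real v (cos (cd_norm v M))) (cd_scal v (sinc (cd_norm v M)) M).

Definition cd_anticomm (v : nat) (a b : CD v) : CD v :=
  cd_add v (cd_mul v a b) (cd_mul v b a).

(* Main.v *)
Require Import Defs.
From Stdlib Require Import Reals Lra Arith.
Open Scope R_scope.

Fixpoint coord (v : nat) : CD v -> nat -> R :=
  match v return CD v -> nat -> R with
  | O => fun x _ => x
  | S n => fun x i => if Nat.even i then coord n (fst x) (Nat.div2 i)
                      else coord n (snd x) (Nat.div2 i)
  end.

Lemma coord_ext v : forall x y : CD v, (forall i, coord v x i = coord v y i) -> x = y.
Proof.
  induction v as [|n IH]; simpl.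
  - intros x y H; exact (H O).
  - intros [x1 x2] [y1 y2] H; simpl in H; f_equal; apply IH; intro k.
    + specialize (H (2*k)%nat). rewrite Nat.even_mul, Nat.div2_double in H. exact H.
    + specialize (H (S (2*k))%nat). rewrite Nat.even_succ, Nat.odd_mul, Nat.div2_succ_double in H.
      exact H.
Qed.

Lemma coord_add v : forall x y i, coord v (cd_add v x y) i = coord v x i + coord v y i.
Proof. induction v; simpl; auto; intros; destruct (Nat.even i); apply IHv. Qed.
Lemma coord_opp v : forall x i, coord v (cd_opp v x) i = - coord v x i.
Proof. induction v; simpl; auto; intros; destruct (Nat.even i); apply IHv. Qed.
Lemma coord_scal v : forall r x i, coord v (cd_scal v r x) i = r * coord v x i.
Proof. induction v; simpl; auto; intros; destruct (Nat.even i); apply IHv. Qed.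
Lemma coord_sub v : forall x y i, coord v (cd_sub v x y) i = coord v x i - coord v y i.
Proof. intros; unfold cd_sub; rewrite coord_add, coord_opp; ring. Qed.
Lemma coord_real v : forall r i, coord v (cd_real v r) i = r * coord v (cd_real v 1) i.
Proof.
  induction v; simpl; intros. ring.
  destruct (Nat.even i). apply IHv. rewrite (IHv 0). ring.
Qed.
Lemma coord_zero v : forall i, coord v (cd_zero v) i = 0.
Proof. intros; unfold cd_zero; rewrite coord_real; ring. Qed.

Ltac crush := apply coord_ext; intro i;
  repeat rewrite ?coord_add, ?coord_opp, ?coord_scal, ?coord_sub, ?coord_zero;
  repeat match goal with |- context [coord ?w (cd_real ?w ?r) ?j] =>
    assert_fails (constr_eq r 1); rewrite (coord_real w r j) end;
  try ring.

Lemma conj_add v : forall x y, cd_conj v (cd_add v x y) = cd_add v (cd_conj v x) (cd_conj v y).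
Proof. induction v; simpl; auto; intros; f_equal; auto. crush. Qed.
Lemma conj_opp v : forall x, cd_conj v (cd_opp v x) = cd_opp v (cd_conj v x).
Proof. induction v; simpl; auto; intros; f_equal; auto. Qed.
Lemma conj_scal v : forall r x, cd_conj v (cd_scal v r x) = cd_scal v r (cd_conj v x).
Proof. induction v; simpl; auto; intros; f_equal; auto. crush. Qed.
Lemma conj_sub v : forall x y, cd_conj v (cd_sub v x y) = cd_sub v (cd_conj v x) (cd_conj v y).
Proof. intros; unfold cd_sub; rewrite conj_add, conj_opp; auto. Qed.
Lemma conj_real v : forall r, cd_conj v (cd_real v r) = cd_real v r.
Proof. induction v; simpl; auto; intros; f_equal; auto. crush. Qed.
Lemma conj_conj v : forall x, cd_conj v (cd_conj v x) = x.
Proof. induction v; simpl; auto; intros [a b]; simpl; f_equal; auto. crush. Qed.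

Lemma mul_add v :
  (forall x y z, cd_mul v (cd_add v x y) z = cd_add v (cd_mul v x z) (cd_mul v y z)) /\
  (forall x y z, cd_mul v x (cd_add v y z) = cd_add v (cd_mul v x y) (cd_mul v x z)).
Proof.
  induction v as [|n [L R]]; simpl.
  - split; intros; ring.
  - split; intros [x1 x2] [y1 y2] [z1 z2]; simpl; f_equal;
      rewrite ?L, ?R, ?conj_add, ?L, ?R; crush.
Qed.
Definition mul_addl v := proj1 (mul_add v).
Definition mul_addr v := proj2 (mul_add v).

Lemma mul_scal v :
  (forall r x y, cd_mul v (cd_scal v r x) y = cd_scal v r (cd_mul v x y)) /\
  (forall r x y, cd_mul v x (cd_scal v r y) = cd_scal v r (cd_mul v x y)).
Proof.
  induction v as [|n [L R]]; simpl.
  - split; intros; ring.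
  - split; intros r [x1 x2] [y1 y2]; simpl; f_equal;
      rewrite ?L, ?R, ?conj_scal, ?L, ?R; crush.
Qed.
Definition mul_scall v := proj1 (mul_scal v).
Definition mul_scalr v := proj2 (mul_scal v).

Lemma opp_scal v : forall x, cd_opp v x = cd_scal v (-1) x.
Proof. intros; crush. Qed.

Lemma mul_real v :
  (forall r x, cd_mul v (cd_real v r) x = cd_scal v r x) /\
  (forall r x, cd_mul v x (cd_real v r) = cd_scal v r x).
Proof.
  induction v as [|n [L R]]; simpl.
  - split; intros; ring.
  - split; intros r [x1 x2]; simpl; f_equal;
      rewrite ?L, ?R, ?conj_real, ?L, ?R; crush.
Qed.
Definition mul_reall v := proj1 (mul_real v).
Definition mul_realr v := proj2 (mul_real v).

Lemma conj_mul v : forall x y, cd_conj v (cd_mul v x y) = cd_mul v (cd_conj v y) (cd_conj v x).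
Proof.
  induction v as [|n IH]; simpl.
  - intros; ring.
  - intros [a b] [c d]; simpl; f_equal.
    + rewrite conj_sub, !IH, conj_conj, !opp_scal, ?conj_scal, ?mul_scall, ?mul_scalr. crush.
    + rewrite ?conj_add, ?IH, ?conj_conj, !opp_scal, ?conj_scal, ?mul_scall, ?mul_scalr, ?conj_conj. crush.
Qed.

Lemma imag_conj v z : cd_imag v z -> cd_conj v z = cd_opp v z.
Proof.
  unfold cd_imag, cd_Re; intro H. apply coord_ext; intro i.
  assert (H1 := f_equal (fun w => coord v w i) H); simpl in H1.
  rewrite coord_scal, coord_add, coord_zero in H1. rewrite coord_opp. lra.
Qed.

Theorem lemma12 (v : nat) (M N N1 N2 : CD v) :
  (2 <= v)%nat ->
  cd_imag v M -> cd_imag v N ->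
  N = cd_add v N1 N2 ->
  (exists beta : R, N1 = cd_scal v beta M) ->
  cd_inner v M N2 = cd_zero v ->
  cd_anticomm v (cd_exp v M) (cd_exp v N) =
  cd_add v
    (cd_scal v (2 * cos (cd_norm v M)) (cd_exp v N))
    (cd_scal v (2 * sinc (cd_norm v M))
       (cd_mul v M
          (cd_add v (cd_real v (cos (cd_norm v N)))
                    (cd_scal v (sinc (cd_norm v N)) N1)))).
Proof.
  intros _ HM HN HNe [beta Hb] Hin.
  unfold cd_anticomm, cd_exp.
  set (a := cos (cd_norm v M)). set (s := sinc (cd_norm v M)).
  set (c := cos (cd_norm v N)). set (t := sinc (cd_norm v N)).
  clearbody a s c t.
  apply imag_conj in HM. apply imag_conj in HN.
  assert (HN2 : cd_conj v N2 = cd_opp v N2).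
  { apply coord_ext; intro i.
    assert (H1 := f_equal (fun w => coord v w i) HN); simpl in H1.
    rewrite HNe, Hb, conj_add, conj_scal, HM in H1.
    rewrite coord_add, coord_scal, coord_opp, coord_opp, coord_add, coord_scal in H1.
    rewrite coord_opp. lra. }
  unfold cd_inner, cd_Re in Hin.
  rewrite conj_mul, conj_conj, HN2, HM, !opp_scal, ?mul_scall, ?mul_scalr in Hin.
  assert (Hk : forall i, coord v (cd_mul v N2 M) i = - coord v (cd_mul v M N2) i).
  { intro i. assert (H1 := f_equal (fun w => coord v w i) Hin); simpl in H1.
    rewrite coord_scal, coord_add, !coord_scal, coord_zero in H1. lra. }
  subst N N1.
  repeat rewrite ?mul_addl, ?mul_addr, ?mul_scall, ?mul_scalr, ?mul_reall, ?mul_realr,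
    ?mul_scall, ?mul_scalr.
  apply coord_ext; intro i.
  repeat rewrite ?coord_add, ?coord_opp, ?coord_scal, ?coord_sub, ?coord_zero.
  repeat match goal with |- context [coord ?w (cd_real ?w ?r) ?j] =>
    assert_fails (constr_eq r 1); rewrite (coord_real w r j) end.
  rewrite Hk. ring.
Qed.
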